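(* Let $A=k_{p_{ij}}[x_1,\dots,x_n]$ and let $G$ be a finite subgroup of $\mathrm{Aut}(A)$ generated by quasi-reflections such that $[n]$ is a circle for $G$. Then after replacing each $x_i$ by a suitable nonzero scalar multiple $c_ix_i$ (which leaves the relations $x_jx_i=p_{ij}x_ix_j$ unchanged), one has $\tau_{i,j,1}\in G$ for all $i\ne j$ in $[n]$. Consequently $p_{ij}=-1$ for all $i<j$.
   Context: $k$ is algebraically closed of characteristic zero, $n\ge2$, $[n]=\{1,\dots,n\}$. $A=k_{p_{ij}}[x_1,\dots,x_n]$ is generated by $x_1,\dots,x_n$ with $x_jx_i=p_{ij}x_ix_j$ ($i<j$), nonzero $p_{ij}$, $\deg x_i=1$; $p_{ii}=1$, $p_{ij}=p_{ji}^{-1}$ for $i>j$. $\mathrm{Aut}(A)$: graded algebra automorphisms; $g$ is a quasi-reflection if $\sum_i\mathrm{tr}(g|_{A_i})t^i=\frac1{(1-t)^{n-1}(1-\lambda t)}$ with $\lambda\ne1$. For $s,t$ with $p_{st}=-1$ and $p_{sj}=p_{tj}$ ($j\ne s,t$) and $\lambda\in k^\times$, $\tau_{s,t,\lambda}$ is the automorphism with $x_s\mapsto\lambda x_t$, $x_t\mapsto-\lambda^{-1}x_s$, $x_i\mapsto x_i$ otherwise. $[n]$ is a circle for $G$ if for each pair of distinct $i,j\in[n]$ there are $\tau_{i_s,j_s,\lambda_s}\in G$, $s=0,\dots,t$, with $i_0=i$, $i_{s+1}=j_s$, $j_t=j$. *)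

(* Defs.v *)
From HB Require Import structures.
From mathcomp Require Import all_boot all_order all_algebra.
Set Implicit Arguments. Unset Strict Implicit. Unset Printing Implicit Defensive.
Import Order.TTheory GRing.Theory Num.Theory.
Local Open Scope ring_scope.

(* Concrete model of A = k_{p_ij}[x_1..x_n] (indices 'I_n = {0..n-1}).
   A has the PBW basis of ordered monomials x^a, a : 'I_n -> nat.
   A word x_{w_1} ... x_{w_d} equals coefw p w * x^{count w}, where
   coefw collects p_{w_t w_s} for every inversion s < t, w_s > w_t
   (from x_j x_i = p_ij x_i x_j, i < j). *)

Definition coefw {k : fieldType} {n : nat} (p : 'I_n -> 'I_n -> k) (d : nat)
  (w : d.-tuple 'I_n) : k :=
  \prod_(s < d) \prod_(t < d | (s < t)%N && (tnth w t < tnth w s)%N)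
     p (tnth w t) (tnth w s).

(* Coefficient of the basis monomial x^a in the product L_1 L_2 ... L_d of
   degree-one elements L_t = sum_j L_t(j) x_j of A. *)
Definition prodA {k : fieldType} {n : nat} (p : 'I_n -> 'I_n -> k)
  (L : seq ('I_n -> k)) (a : 'I_n -> nat) : k :=
  \sum_(w : (size L).-tuple 'I_n | [forall i, count_mem i w == a i])
     (\prod_(t < size L) (nth (fun _ => 0) L t) (tnth w t)) * coefw p w.

(* A graded automorphism g is determined by its degree-one part, the matrix
   g with g(x_i) = sum_j g j i x_j (column i = image of x_i). *)
Definition gcol {k : fieldType} {n : nat} (g : 'M[k]_n) (i : 'I_n) : 'I_n -> k :=
  fun j => g j i.

(* g (invertible on A_1) induces a graded algebra automorphism of A iff it
   preserves the defining relations: g(x_j) g(x_i) = p_ij g(x_i) g(x_j). *)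
Definition is_gr_aut {k : fieldType} {n : nat} (p : 'I_n -> 'I_n -> k)
  (g : 'M[k]_n) : Prop :=
  g \in unitmx /\
  forall i j : 'I_n, (i < j)%N -> forall a : 'I_n -> nat,
    prodA p [:: gcol g j; gcol g i] a = p i j * prodA p [:: gcol g i; gcol g j] a.

(* tr(g | A_d): sum over ordered monomials x_{u_1}...x_{u_d} (u sorted) of the
   coefficient of that monomial in g(x_{u_1}) ... g(x_{u_d}). *)
Definition trA {k : fieldType} {n : nat} (p : 'I_n -> 'I_n -> k)
  (g : 'M[k]_n) (d : nat) : k :=
  \sum_(u : d.-tuple 'I_n | sorted (fun x y : 'I_n => (x <= y)%N) u)
     prodA p (map (gcol g) u) (fun i => count_mem i u).

(* quasi-reflection: Hilbert trace series = 1/((1-t)^(n-1)(1-lambda t)),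
   written coefficientwise: coefficient of t^d is
   sum_{m=0}^d lambda^m * C(d-m+n-2, n-2). *)
Definition quasi_reflection {k : fieldType} {n : nat} (p : 'I_n -> 'I_n -> k)
  (g : 'M[k]_n) : Prop :=
  exists lam : k, lam != 1 /\
    forall d : nat, trA p g d =
      \sum_(m < d.+1) lam ^+ m * ('C(d - m + n - 2, n - 2))%:R.

(* matrix of tau_{s,t,lam}: x_s |-> lam x_t, x_t |-> - lam^-1 x_s, x_i |-> x_i. *)
Definition taumx {k : fieldType} {n : nat} (s t : 'I_n) (lam : k) : 'M[k]_n :=
  \matrix_(j, i) (if i == s then (if j == t then lam else 0)
                  else if i == t then (if j == s then - lam^-1 else 0)
                  else (j == i)%:R).

(* tau_{s,t,lam} is defined (and belongs to G) *)
Definition tau_in {k : fieldType} {n : nat} (p : 'I_n -> 'I_n -> k)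
  (G : seq 'M[k]_n) (s t : 'I_n) (lam : k) : Prop :=
  [/\ s != t, lam != 0, p s t = -1,
      (forall j : 'I_n, j != s -> j != t -> p s j = p t j)
    & taumx s t lam \in G].

Inductive tau_chain {k : fieldType} {n : nat} (p : 'I_n -> 'I_n -> k)
  (G : seq 'M[k]_n) : 'I_n -> 'I_n -> Prop :=
| tc_one s t lam : tau_in p G s t lam -> tau_chain p G s t
| tc_cons s t lam j : tau_in p G s t lam -> tau_chain p G t j -> tau_chain p G s j.

Definition is_circle {k : fieldType} {n : nat} (p : 'I_n -> 'I_n -> k)
  (G : seq 'M[k]_n) : Prop :=
  forall i j : 'I_n, i != j -> tau_chain p G i j.

Definition finite_aut_subgroup {k : fieldType} {n : nat} (p : 'I_n -> 'I_n -> k)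
  (G : seq 'M[k]_n) : Prop :=
  [/\ forall g, g \in G -> is_gr_aut p g,
      1%:M \in G,
      forall g h, g \in G -> h \in G -> g *m h \in G
    & forall g, g \in G -> invmx g \in G].

Definition gen_by_qr {k : fieldType} {n : nat} (p : 'I_n -> 'I_n -> k)
  (G : seq 'M[k]_n) : Prop :=
  forall g, g \in G -> exists hs : seq 'M[k]_n,
    (forall h, h \in hs -> h \in G /\ quasi_reflection p h) /\
    g = foldr (fun a b => a *m b) 1%:M hs.

(* Main.v *)
Require Import Defs.
From HB Require Import structures.
From mathcomp Require Import all_boot all_order all_algebra.
From mathcomp Require Import ring.
Import GRing.Theory.
Local Open Scope ring_scope.

Definition sw {n : nat} (s t q : 'I_n) : 'I_n := if q == s then t else if q == t then s else q.
Definition ww {k : fieldType} {n : nat} (s t : 'I_n) (l : k) (q : 'I_n) : k :=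
  if q == s then l else if q == t then - l^-1 else 1.

Lemma tauE {k : fieldType} {n : nat} (s t : 'I_n) (l : k) j i : s != t ->
  taumx s t l j i = if j == sw s t i then ww s t l i else 0.
Proof.
move=> st; rewrite /taumx mxE /sw /ww.
have [hi|hi] := eqVneq i s; first by [].
have [hi2|hi2] := eqVneq i t; first by [].
by case: eqVneq.
Qed.

Lemma mul_tau {k : fieldType} {n : nat} (A : 'M[k]_n) (s t : 'I_n) (l : k) r q : s != t ->
  (A *m taumx s t l) r q = A r (sw s t q) * ww s t l q.
Proof.
move=> st; rewrite mxE (bigD1 (sw s t q)) //= tauE // eqxx big1 ?addr0 //.
by move=> j /negbTE hj; rewrite tauE // hj mulr0.
Qed.


Ltac brute :=
  repeat (rewrite ?eqxx /=; match goal with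
  | H : is_true (?x != ?x) |- _ => by rewrite eqxx in H
  | |- context [@eq_op _ ?x ?y] =>
      is_var x; is_var y;
      let E := fresh "E" in
      have [E|E] := eqVneq x y; [subst x|]
  end); rewrite ?eqxx /=.

Ltac fin l0 := try (field; rewrite ?oppr_eq0 ?invr_eq0 ?oner_eq0 ?andbT ?andTb /=;
  repeat (apply/andP; split); rewrite ?oppr_eq0 ?invr_eq0 ?oner_eq0 //;
  try (apply: mulf_neq0; assumption)); try ring.

Lemma tau_cube {k : fieldType} {n : nat} (s t : 'I_n) (l : k) : s != t -> l != 0 ->
  taumx s t l *m taumx s t l *m taumx s t l = taumx s t (- l).
Proof.
move=> st l0; apply/matrixP => r q.
rewrite !mul_tau // !tauE //.
rewrite /sw /ww; brute.
all: fin l0.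
Qed.

Lemma tau_swap {k : fieldType} {n : nat} (s t : 'I_n) (l : k) : s != t -> l != 0 ->
  taumx s t l = taumx t s (- l^-1).
Proof.
move=> st l0; apply/matrixP => r q.
have ts : t != s by rewrite eq_sym.
rewrite !tauE // /sw /ww; brute.
all: fin l0.
Qed.

Lemma tau_comp {k : fieldType} {n : nat} (a b c : 'I_n) (l m : k) : a != b -> b != c -> a != c ->
  l != 0 -> m != 0 ->
  taumx a b l *m taumx b c m *m taumx a b (- l) = taumx a c (- (l * m)).
Proof.
move=> ab bc ac l0 m0; apply/matrixP => r q.
rewrite !mul_tau // !tauE // /sw /ww; brute.
all: fin l0.
Qed.

Lemma tau_diag {k : fieldType} {n : nat} (d : 'I_n -> k) (i j : 'I_n) : i != j -> (forall x, d x != 0) ->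
  diag_mx (\row_x d x) *m taumx i j 1 = taumx i j (d j / d i) *m diag_mx (\row_x d x).
Proof.
move=> ij d0; apply/matrixP => r q.
rewrite mul_diag_mx mul_mx_diag !mxE; brute.
all: try (have := d0 i); try (have := d0 j); try (have := d0 q); try (have := d0 r); move=> *.
all: fin l0.
Qed.

Theorem lemma4p1 (k : closedFieldType) (hchar : [pchar k] =i pred0)
  (n : nat) (hn : (2 <= n)%N) (p : 'I_n -> 'I_n -> k)
  (hpii : forall i, p i i = 1)
  (hpinv : forall i j : 'I_n, (j < i)%N -> p i j = (p j i)^-1)
  (hp0 : forall i j, p i j != 0)
  (G : seq 'M[k]_n)
  (hG : finite_aut_subgroup p G)
  (hgen : gen_by_qr p G)
  (hcirc : is_circle p G) :
  exists c : 'I_n -> k, (forall i, c i != 0) /\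
    (forall i j : 'I_n, i != j ->
       diag_mx (\row_l c l) *m taumx i j 1 *m invmx (diag_mx (\row_l c l)) \in G) /\
    (forall i j : 'I_n, (i < j)%N -> p i j = -1).
Proof.
case: hG => _ _ hmul _.
pose R x y (l : k) := (l != 0) && (taumx x y l \in G).
have Rneg : forall x y l, x != y -> R x y l -> R x y (- l).
  move=> x y l xy /andP[l0 hT]; rewrite /R oppr_eq0 l0 -tau_cube //.
  by rewrite !hmul.
have Rswap : forall x y l, x != y -> R x y l -> R y x (l^-1).
  move=> x y l xy Rl; have /andP[l0 hT] := Rl.
  have yx : y != x by rewrite eq_sym.
  rewrite -[l^-1]opprK; apply: Rneg => //.
  by rewrite /R oppr_eq0 invr_eq0 l0 -tau_swap.
have Rcomp : forall a b c l m, a != b -> b != c -> a != c -> R a b l -> R b c m ->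
    R a c (l * m).
  move=> a b c l m ab bc ac Rl Rm.
  have /andP[l0 hl] := Rl; have /andP[m0 hm] := Rm.
  have /andP[_ hl'] := Rneg _ _ _ ab Rl.
  rewrite -[l * m]opprK; apply: Rneg => //.
  by rewrite /R oppr_eq0 mulf_neq0 // -(@tau_comp _ _ a b c l m) // !hmul.
have chain : forall x y, tau_chain p G x y -> x != y -> (exists l, R x y l) /\ p x y = -1.
  move=> x y; elim => [s t lam [st l0 pst _ hT] _|s t lam j [st l0 pst pj hT] _ IH sj].
    by split => //; exists lam; rewrite /R l0.
  have [tj|tj] := eqVneq t j.
    by subst t; split => //; exists lam; rewrite /R l0.
  have [[m Rm] ptj] := IH tj.
  split; last by rewrite pj // eq_sym.
  by exists (lam * m); apply: Rcomp Rm => //; rewrite /R l0.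
have o_lt : (0 < n)%N by apply: leq_trans hn.
pose o := Ordinal o_lt.
pose P x (l : k) := if x == o then l == 1 else R o x l.
have exP : forall x, exists l, P x l.
  move=> x; have [xo|xo] := eqVneq x o; first by exists 1; rewrite /P xo eqxx.
  have ox : o != x by rewrite eq_sym.
  have [[l Rl] _] := chain _ _ (hcirc _ _ ox) ox; exists l; by rewrite /P (negbTE xo).
pose c x := xchoose (exP x).
have cP : forall x, P x (c x) by move=> x; apply: xchooseP.
have co : c o = 1 by have := cP o; rewrite /P eqxx => /eqP.
have cR : forall x, x != o -> R o x (c x).
  by move=> x xo; have := cP x; rewrite /P (negbTE xo).
have c0 : forall x, c x != 0.
  move=> x; have [->|xo] := eqVneq x o; first by rewrite co oner_eq0.
  by have /andP[] := cR x xo.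
have Ri0 : forall x, x != o -> R x o (c x)^-1.
  by move=> x xo; apply: Rswap; [rewrite eq_sym|apply: cR].
exists c; split => //; split; last first.
  move=> i j ij; have ij' : i != j by rewrite neq_ltn ij.
  by have [] := chain _ _ (hcirc _ _ ij') ij'.
move=> i j ij.
have uD : diag_mx (\row_l c l) \in unitmx.
  rewrite unitmxE det_diag unitfE; apply/prodf_neq0 => x _.
  by rewrite mxE c0.
rewrite tau_diag // mulmxK //.
suff /andP[] : R i j (c j / c i) by [].
have [io|io] := eqVneq i o.
  by subst i; rewrite co divr1; apply: cR; rewrite eq_sym.
have [jo|jo] := eqVneq j o.
  by subst j; rewrite co div1r; apply: Ri0.
rewrite mulrC; apply: Rcomp (Ri0 _ io) (cR _ jo) => //; by rewrite eq_sym.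
Qed.
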